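(* Let $n\geq 3$ and let $S_n$ be the star graph with vertices $a_1,\dots,a_n$ and center $a_1$. For every $f:V\to\mathbb{R}$, $${\rm Var}_2 M_{S_n}f\leq \frac{\left((n-1)^2+n-2\right)^{1/2}}{n}\,{\rm Var}_2 f.$$ Moreover, the constant $\frac{((n-1)^2+n-2)^{1/2}}{n}$ is optimal, i.e. it cannot be replaced by any smaller constant.
   Context: For a finite connected graph $G=(V,E)$ with graph distance $d_G$ and $f:V\to\mathbb{R}$, $M_Gf(v)=\sup_{r\geq 0}\frac{1}{|B(v,r)|}\sum_{u\in B(v,r)}|f(u)|$, where $B(v,r)=\{u\in V: d_G(u,v)\le r\}$. For $g:V\to\mathbb{R}$ and $p>0$, ${\rm Var}_p g=\left(\sum_{\{v_1,v_2\}\in E}|g(v_1)-g(v_2)|^p\right)^{1/p}$. The star graph $S_n$ has vertex set $V=\{a_1,\dots,a_n\}$ and edges exactly between $a_1$ and each $a_i$, $i\ge 2$. *)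

(* Defs.v *)
From HB Require Import structures.
From mathcomp Require Import all_boot all_order all_algebra.
From mathcomp Require Import all_classical all_reals.
Set Implicit Arguments. Unset Strict Implicit. Unset Printing Implicit Defensive.
Import Order.TTheory GRing.Theory Num.Theory.
Local Open Scope ring_scope.
Local Open Scope classical_set_scope.

Fixpoint walk (V : finType) (e : rel V) (k : nat) (u w : V) : bool :=
  match k with
  | 0 => u == w
  | k'.+1 => [exists x, e u x && walk e k' x w]
  end.

(* B(v,r) = {u : d_G(u,v) <= r}, for real r >= 0;
   d_G(u,v) <= r iff there is a walk of some length k <= r from v to u *)
Definition ball (R : realType) (V : finType) (e : rel V) (v : V) (r : R)
  : {set V} :=
  [set u | `[< exists k : nat, (k%:R <= r) /\ walk e k v u >]].

Definition ball_avg (R : realType) (V : finType) (e : rel V) (f : V -> R)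
  (v : V) (r : R) : R :=
  (#|ball e v r|%:R)^-1 * \sum_(u in ball e v r) `|f u|.

Definition maxfun (R : realType) (V : finType) (e : rel V) (f : V -> R)
  (v : V) : R :=
  sup [set ball_avg e f v r | r in [set r : R | 0 <= r]].

(* Each unordered edge
   {v1,v2} is counted exactly once, via its representative ordered pair (v1,v2) with
   enum_rank v1 < enum_rank v2 (the term is symmetric in v1, v2). *)
Definition Var2 (R : realType) (V : finType) (e : rel V) (g : V -> R) : R :=
  Num.sqrt (\sum_(p : V * V | e p.1 p.2 && (enum_rank p.1 < enum_rank p.2)%N)
              `|g p.1 - g p.2| ^+ 2).

(* Star graph S_n on 'I_n: a_1 is vertex 0, edges exactly between 0 and each i <> 0. *)
Definition star (n : nat) : rel 'I_n :=
  fun i j => ((val i == 0%N) && (val j != 0%N)) || ((val j == 0%N) && (val i != 0%N)).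
Arguments star n : clear implicits.

(* Main.v *)
Require Import Defs.
From mathcomp Require Import all_boot all_order all_algebra.
From mathcomp Require Import all_classical all_reals.
From mathcomp Require Import ring lra.
Import Order.TTheory GRing.Theory Num.Theory.
Local Open Scope ring_scope.

Set Implicit Arguments. Unset Strict Implicit. Unset Printing Implicit Defensive.

Definition sdist n (v u : 'I_n) : nat :=
  if v == u then 0%N else if (val v == 0%N) || (val u == 0%N) then 1%N else 2%N.

Lemma star_irr n (v : 'I_n) : star n v v = false.
Proof. by rewrite /star; case: (val v == 0%N). Qed.

Lemma sdist_le2 n (v u : 'I_n) : (sdist v u <= 2)%N.
Proof. rewrite /sdist; case: ifP => //; case: ifP => //. Qed.

Lemma walk_ge n k (v u : 'I_n) : walk (star n) k v u -> (sdist v u <= k)%N.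
Proof.
case: k => [/= /eqP hvu | [|k]]; first by subst; rewrite /sdist eqxx.
- move=> /= /existsP [x /andP [hvx /eqP hxu]]; subst x.
  rewrite /sdist; case: (eqVneq v u) => [hvu|hvu]; first by subst; rewrite star_irr in hvx.
  by move: hvx; rewrite /star; case: (val v == 0%N); case: (val u == 0%N).
- move=> _; exact: leq_trans (sdist_le2 v u) _.
Qed.

Lemma walk_dist n (v u : 'I_n) : walk (star n) (sdist v u) v u.
Proof.
rewrite /sdist; case: eqP => [->|hvu] /=; first by [].
case: ifP => h /=.
- apply/existsP; exists u; rewrite eqxx andbT /star.
  have hvu' : (v : nat) != u by apply/eqP => /val_inj.
  move: h hvu'; rewrite /star /=; move: (nat_of_ord v) (nat_of_ord u) => a b.
  by case: a => [|a]; case: b => [|b].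
- move/negbT: h; rewrite negb_or => /andP [hv hu].
  have h0 : (0 < n)%N by apply: leq_ltn_trans (ltn_ord v).
  apply/existsP; exists (Ordinal h0); apply/andP; split.
    by rewrite /star /= hv orbT.
  apply/existsP; exists u; by rewrite /star /= hu eqxx.
Qed.

Lemma ball_star (R : realType) n (v : 'I_n) (r : R) :
  ball (star n) v r = [set u | (sdist v u)%:R <= r].
Proof.
apply/setP => u; rewrite !inE; apply/asboolP/idP.
- case=> k [hk hw]; apply: le_trans hk; rewrite ler_nat; exact: walk_ge.
- move=> h; exists (sdist v u); split => //; exact: walk_dist.
Qed.

Definition bset n (v : 'I_n) (k : nat) : {set 'I_n} := [set u | (sdist v u <= k)%N].

Definition rk (R : realType) (r : R) : nat := if r < 1 then 0%N else if r < 2 then 1%N else 2%N.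

Lemma ball_bset (R : realType) n (v : 'I_n) (r : R) : 0 <= r ->
  ball (star n) v r = bset v (rk r).
Proof.
move=> r0; rewrite ball_star; apply/setP => u; rewrite !inE /rk.
have := sdist_le2 v u; case: (sdist v u) => [|[|[|d]]] // _;
case: (ltrP r 1) => h1; try case: (ltrP r 2) => h2; simpl; by [] || (exfalso; lra).
Qed.

Definition avgS (R : realType) n (f : 'I_n -> R) (S : {set 'I_n}) : R :=
  (#|S|%:R)^-1 * \sum_(u in S) `|f u|.

Lemma maxfun_star (R : realType) n (f : 'I_n -> R) (v : 'I_n) :
  maxfun (star n) f v = Num.max (avgS f (bset v 0)) (Num.max (avgS f (bset v 1)) (avgS f (bset v 2))).
Proof.
set M := Num.max _ _.
rewrite /maxfun; set E := (X in sup X).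
have hE : forall y, E y -> y <= M.
  move=> y [r hr <-]; rewrite /ball_avg ball_bset //.
  rewrite /M /rk; case: ifP => _; first by rewrite !le_max lexx.
  by case: ifP => _; rewrite !le_max lexx ?orbT.
have hin : forall k : nat, (k <= 2)%N -> E (avgS f (bset v k)).
  move=> k hk; exists k%:R; first by rewrite /= ler0n.
  rewrite /ball_avg ball_bset ?ler0n // /rk.
  by case: k hk => [|[|[|]]] //= _; rewrite ?ltr01 //;
     case: ifP => h; try (exfalso; move: h; lra);
     case: ifP => h'; try (exfalso; move: h'; lra).
have hsup : has_sup E by split; [exists (avgS f (bset v 0)); exact: hin | exists M; exact: hE].
apply/le_anti/andP; split.
  apply: ge_sup; first by exists (avgS f (bset v 0)); exact: hin.
  exact: hE.
have ub := sup_upper_bound hsup.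
rewrite /M !ge_max; rewrite !ub //; exact: hin.
Qed.

Lemma bset00 n : bset (@ord0 n) 0 = [set ord0].
Proof.
apply/setP => u; rewrite !inE /sdist eq_sym; case: eqP => //= _.
Qed.

Lemma bset0k n k : (1 <= k)%N -> bset (@ord0 n) k = [set: _]%SET.
Proof.
move=> hk; apply/setP => u; rewrite !inE /sdist; case: eqP => //= _.
Qed.

Lemma bsetL0 n (j : 'I_n) : bset (lift ord0 j) 0 = [set lift ord0 j].
Proof. apply/setP => u; rewrite !inE /sdist eq_sym; case: eqP => //= _.
by case: ifP.
Qed.

Lemma bsetL1 n (j : 'I_n) : bset (lift ord0 j) 1 = [set lift ord0 j; ord0].
Proof.
apply/setP => u; rewrite !inE /sdist [u == lift _ _]eq_sym; case: eqP => //= _.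
rewrite /bump /=. case: (eqVneq u ord0) => [->|hu] //=.
have : (u : nat) != 0%N by apply: contra hu => /eqP h; apply/eqP/val_inj.
by move/negbTE => ->.
Qed.

Lemma bsetL2 n (j : 'I_n) : bset (lift ord0 j) 2 = [set: _]%SET.
Proof. apply/setP => u; rewrite !inE; exact: sdist_le2. Qed.

Lemma avgS1 (R : realType) n (f : 'I_n -> R) x : avgS f [set x] = `|f x|.
Proof. by rewrite /avgS cards1 big_set1 invr1 mul1r. Qed.

Lemma avgS2 (R : realType) n (f : 'I_n -> R) x y : x != y ->
  avgS f [set x; y] = (`|f x| + `|f y|) / 2.
Proof.
move=> hxy; rewrite /avgS cards2 hxy big_setU1 ?inE ?(eq_sym y) //.
by rewrite big_set1 mulrC.
Qed.

Lemma avgST (R : realType) n (f : 'I_n -> R) :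
  avgS f [set: _]%SET = (\sum_u `|f u|) / n%:R.
Proof.
rewrite /avgS cardsT card_ord mulrC; congr (_ * _).
by apply: eq_bigl => u; rewrite inE.
Qed.

Lemma Var2_star (R : realType) n (g : 'I_n.+1 -> R) :
  Var2 (star n.+1) g = Num.sqrt (\sum_(j < n) (g (lift ord0 j) - g ord0) ^+ 2).
Proof.
rewrite /Var2; congr Num.sqrt.
rewrite -(pair_big_dep xpredT (fun i j => star _ i j && (enum_rank i < enum_rank j)%N)
   (fun i j => `|g i - g j| ^+ 2)) /=.
rewrite big_ord_recl.
rewrite [X in _ + X]big1 ?addr0; last first.
  move=> i _; apply: big_pred0 => j; rewrite !enum_rank_ord /star /=.
  by case: (j : nat) => //=; rewrite andbF.
rewrite big_mkcond big_ord_recl /= add0r; apply: eq_bigr => j _.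
rewrite !enum_rank_ord /=.
by rewrite -normrN opprB real_normK // num_real.
Qed.

Lemma pt1 (R : realType) (a A x : R) : a < A ->
  Num.max x (Num.max ((x + a) / 2) A) - A = Num.max (x - A) 0.
Proof. move=> h; rewrite !maxEle; case: (leP ((x + a) / 2) A) => ?; repeat (case: leP => ?); lra. Qed.

Lemma pt2 (R : realType) (a A x : R) : A <= a ->
  (Num.max x (Num.max ((x + a) / 2) A) - a) ^+ 2 <=
  (Num.max (x - a) 0) ^+ 2 + (a - A) / 2 * (Num.max (x - a) 0 - (x - a)).
Proof. move=> h; rewrite !maxEle; case: (leP ((x + a) / 2) A) => ?; case: (leP x A) => ?; case: (leP x ((x + a) / 2)) => ?; case: (leP (x - a) 0) => ?; nra. Qed.

Lemma sum_sq_lin (R : realType) m (u c : 'I_m -> R) (al be ga : R) :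
  \sum_j (al * u j + be * c j + ga) ^+ 2 =
  al ^+ 2 * \sum_j u j ^+ 2 + be ^+ 2 * \sum_j c j ^+ 2 + m%:R * ga ^+ 2
  + 2 * al * be * \sum_j (u j * c j) + 2 * al * ga * \sum_j u j
  + 2 * be * ga * \sum_j c j.
Proof.
have E : forall j, (al * u j + be * c j + ga) ^+ 2 =
  al ^+ 2 * u j ^+ 2 + be ^+ 2 * c j ^+ 2 + ga ^+ 2
  + 2 * al * be * (u j * c j) + 2 * al * ga * u j + 2 * be * ga * c j.
  by move=> j; ring.
rewrite (eq_bigr _ (fun j _ => E j)) !big_split /= -!mulr_sumr sumr_const card_ord.
rewrite -[ga *+ m]mulr_natl; ring.
Qed.

Lemma sum_sq_le (R : realType) m (c : 'I_m -> R) : (forall j, 0 <= c j) ->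
  \sum_j c j ^+ 2 <= (\sum_j c j) ^+ 2.
Proof.
move=> h0; rewrite [X in _ <= X]expr2 mulr_suml; apply: ler_sum => j _.
rewrite expr2 ler_wpM2l //; rewrite (bigD1 j) //= lerDl; exact: sumr_ge0.
Qed.

Lemma core (R : realType) m (hm : (2 <= m)%N) (a : R) (x : 'I_m -> R) (N A : R) :
  N = m%:R + 1 -> A = (a + \sum_j x j) / N ->
  N ^+ 2 * \sum_j (Num.max (x j) (Num.max ((x j + a) / 2) A) - Num.max a A) ^+ 2
   <= (N ^+ 2 - N - 1) * \sum_j (x j - a) ^+ 2.
Proof.
move=> eN eA.
have hm2 : (2 : R) <= m%:R by rewrite (ler_nat R 2 m).
have hN : 3 <= N by rewrite eN; lra.
have hN0 : N != 0 by apply/eqP; lra.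
set K := N ^+ 2 - N - 1.
have hK : 0 < K by rewrite /K; nra.
pose u j := x j - a.
set X := \sum_j (x j - a) ^+ 2.
have hX : X = \sum_j u j ^+ 2 by [].
have hU : \sum_j u j = N * (A - a).
  rewrite /u sumrB sumr_const card_ord eA mulrBr mulrC divfK //.
  rewrite eN -mulr_natl; ring.
case: (ltP a A) => hA.
-
  set U := \sum_j u j.
  pose c j := Num.max (u j - U / N) 0.
  have hd : forall j, Num.max (x j) (Num.max ((x j + a) / 2) A) - A = c j.
    have hUN : U / N = A - a by rewrite /U hU; field.
    move=> j; rewrite pt1 // /c /u hUN; congr Num.max; ring.
  rewrite (eq_bigr _ (fun j _ => congr1 (fun t => t ^+ 2) (hd j))).
  set Y := \sum_j c j ^+ 2.
  set S := \sum_j c j.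
  set Z := \sum_j (u j * c j).
  have hc0 : forall j, 0 <= c j by move=> j; rewrite /c le_max lexx orbT.
  have hcc : forall j, c j ^+ 2 = c j * u j - U / N * c j.
    move=> j; rewrite /c maxEle; case: leP => ?; ring.
  have hY : Y = Z - U / N * S.
    rewrite /Y (eq_bigr _ (fun j _ => hcc j)) sumrB -mulr_sumr /Z.
    by congr (_ - _); apply: eq_bigr => j _; rewrite mulrC.
  have hYS : Y <= S ^+ 2 by apply: sum_sq_le.
  have hSOS := sum_sq_lin u c K (- N ^+ 2) (N * S).
  have hsos0 : 0 <= \sum_j (K * u j + - N ^+ 2 * c j + N * S) ^+ 2.
    by apply: sumr_ge0 => j _; apply: sqr_ge0.
  rewrite hSOS -/Y -/S -/Z -hX -/U in hsos0.
  have hmN : m%:R = N - 1 by rewrite eN; ring.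
  rewrite hmN in hsos0.
  have E : K * (K * X - N ^+ 2 * Y) =
     (K ^+ 2 * X + (- N ^+ 2) ^+ 2 * Y + (N - 1) * (N * S) ^+ 2 +
      2 * K * - N ^+ 2 * Z + 2 * K * (N * S) * U + 2 * - N ^+ 2 * (N * S) * S)
     + N ^+ 2 * (N + 1) * (S ^+ 2 - Y).
    rewrite hY /K; field => //.
  have : 0 <= K * (K * X - N ^+ 2 * Y).
    rewrite E; apply: addr_ge0 => //; apply: mulr_ge0; first by apply: mulr_ge0; [apply: sqr_ge0|lra].
    lra.
  rewrite pmulr_rge0 //; lra.
-
  set U := \sum_j u j.
  set de := a - A.
  have hde : 0 <= de by rewrite /de; lra.
  have hUd : U = - (N * de) by rewrite /U hU /de; ring.
  pose c j := Num.max (x j - a) 0.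
  set Y := \sum_j c j ^+ 2.
  set S := \sum_j c j.
  set Z := \sum_j (u j * c j).
  have hc0 : forall j, 0 <= c j by move=> j; rewrite /c le_max lexx orbT.
  have hle : \sum_j (Num.max (x j) (Num.max ((x j + a) / 2) A) - a) ^+ 2
             <= \sum_j (c j ^+ 2 + de / 2 * (c j - u j)).
    by apply: ler_sum => j _; apply: pt2.
  rewrite big_split /= -mulr_sumr sumrB -/Y -/S -/U in hle.
  have hZ : Z = Y.
    rewrite /Z /Y; apply: eq_bigr => j _; rewrite /c /u maxEle; case: leP => ?; ring.
  have hYS : Y <= S ^+ 2 by apply: sum_sq_le.
  have hS0 : 0 <= S by apply: sumr_ge0.
  set mR := m%:R in eN hm2 *.
  have hSOS := sum_sq_lin u c (mR * K) (- (mR * N ^+ 2)) (N ^+ 2 * S + N * K * de).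
  have hsos0 : 0 <= \sum_j (mR * K * u j + - (mR * N ^+ 2) * c j + (N ^+ 2 * S + N * K * de)) ^+ 2.
    by apply: sumr_ge0 => j _; apply: sqr_ge0.
  rewrite hSOS -/Y -/S -/Z -hX -/U hZ hUd in hsos0.
  rewrite -/mR in hsos0.
  set W := Y + de * S / 2 + N * de ^+ 2 / 2.
  set Q := S ^+ 2 + K * S * de * (2 * N - mR / 2) + K * de ^+ 2 * (K - mR * N / 2).
  have E : mR ^+ 2 * K * (K * X - N ^+ 2 * W) =
     ((mR * K) ^+ 2 * X + (- (mR * N ^+ 2)) ^+ 2 * Y + mR * (N ^+ 2 * S + N * K * de) ^+ 2 +
      2 * (mR * K) * - (mR * N ^+ 2) * Y + 2 * (mR * K) * (N ^+ 2 * S + N * K * de) * - (N * de) +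
      2 * - (mR * N ^+ 2) * (N ^+ 2 * S + N * K * de) * S)
     + mR * N ^+ 2 * ((N ^+ 2 - 1) * (S ^+ 2 - Y) + Q).
    by rewrite /W /Q /K eN; field.
  have hQ : 0 <= Q.
    have h1 : 0 <= 2 * N - mR / 2 by rewrite /mR; lra.
    have h2 : 0 <= K - mR * N / 2 by rewrite /K eN /mR; nra.
    rewrite /Q; apply: addr_ge0; first apply: addr_ge0.
    - exact: sqr_ge0.
    - by apply: mulr_ge0 => //; apply: mulr_ge0 => //; apply: mulr_ge0 => //; lra.
    - by apply: mulr_ge0 => //; apply: mulr_ge0; [lra | apply: sqr_ge0].
  have hmR : 2 <= mR by [].
  have : 0 <= mR ^+ 2 * K * (K * X - N ^+ 2 * W).
    rewrite E; apply: addr_ge0 => //; apply: mulr_ge0; first by apply: mulr_ge0; [lra|apply: sqr_ge0].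
    apply: addr_ge0 => //; apply: mulr_ge0; [nra|lra].
  have hmK : 0 < mR ^+ 2 * K by apply: mulr_gt0 => //; nra.
  rewrite pmulr_rge0 // => hW.
  have hWeq : Y + de / 2 * (S - - (N * de)) = W by rewrite /W; field.
  rewrite hUd hWeq in hle.
  have hN2 : 0 <= N ^+ 2 by apply: sqr_ge0.
  apply: le_trans (_ : N ^+ 2 * W <= _); last by lra.
  by apply: ler_wpM2l.
Qed.

Definition Aavg (R : realType) n (f : 'I_n.+1 -> R) : R :=
  (`|f ord0| + \sum_(j < n) `|f (lift ord0 j)|) / (n%:R + 1).

Lemma avgST' (R : realType) n (f : 'I_n.+1 -> R) :
  avgS f [set: _]%SET = Aavg f.
Proof. by rewrite avgST big_ord_recl /Aavg natr1. Qed.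

Lemma Mf0 (R : realType) n (f : 'I_n.+1 -> R) :
  maxfun (star n.+1) f ord0 = Num.max `|f ord0| (Num.max (Aavg f) (Aavg f)).
Proof. by rewrite maxfun_star bset00 !bset0k // avgS1 avgST'. Qed.

Lemma MfL (R : realType) n (f : 'I_n.+1 -> R) j :
  maxfun (star n.+1) f (lift ord0 j) =
  Num.max `|f (lift ord0 j)| (Num.max ((`|f (lift ord0 j)| + `|f ord0|) / 2) (Aavg f)).
Proof.
by rewrite maxfun_star bsetL0 bsetL1 bsetL2 avgS1 avgST' avgS2 // eq_sym neq_lift.
Qed.

Lemma sq_abs_le (R : realType) (x y : R) : (`|x| - `|y|) ^+ 2 <= (x - y) ^+ 2.
Proof.
have h : x * y <= `|x| * `|y| by rewrite -normrM; apply: ler_norm.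
have hx : `|x| ^+ 2 = x ^+ 2 by rewrite real_normK // num_real.
have hy : `|y| ^+ 2 = y ^+ 2 by rewrite real_normK // num_real.
have E1 : (`|x| - `|y|) ^+ 2 = `|x| ^+ 2 + `|y| ^+ 2 - 2 * (`|x| * `|y|) by ring.
have E2 : (x - y) ^+ 2 = x ^+ 2 + y ^+ 2 - 2 * (x * y) by ring.
rewrite E1 E2 hx hy; lra.
Qed.

Lemma part1 (R : realType) k (hk : (2 <= k)%N) (f : 'I_k.+1 -> R) :
  Var2 (star k.+1) (maxfun (star k.+1) f) <=
  Num.sqrt (((k.+1 - 1)%N%:R) ^+ 2 + (k.+1 - 2)%N%:R) / k.+1%:R * Var2 (star k.+1) f.
Proof.
rewrite !Var2_star.
set N := k%:R + 1 : R.
have hN : 3 <= N by rewrite /N; have := (ler_nat R 2 k); rewrite hk; lra.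
have eK : ((k.+1 - 1)%N%:R) ^+ 2 + (k.+1 - 2)%N%:R = N ^+ 2 - N - 1 :> R.
  rewrite subn1 /= subn2 /= /N -(prednK (ltnW hk)) /= -!natr1 ; ring.
rewrite eK -natr1 -/N.
set K := N ^+ 2 - N - 1.
have hK : 0 <= K by rewrite /K; nra.
under eq_bigr => j _ do rewrite MfL Mf0 maxxx.
have hc := @core R k hk `|f ord0| (fun j => `|f (lift ord0 j)|) N (Aavg f) erefl erefl.
set P := \sum_j _ in hc.
set Q' := \sum_j _ in hc.
have hQ : Q' <= \sum_(j < k) (f (lift ord0 j) - f ord0) ^+ 2.
  by apply: ler_sum => j _; apply: sq_abs_le.
set Q := \sum_(j < k) (f (lift ord0 j) - f ord0) ^+ 2 in hQ *.
have hQ0 : 0 <= Q by apply: sumr_ge0 => j _; apply: sqr_ge0.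
have hN0 : 0 < N by lra.
have -> : Num.sqrt K / N * Num.sqrt Q = Num.sqrt (K * Q / N ^+ 2).
  rewrite sqrtrM ?mulr_ge0 // sqrtrM // sqrtrV ?sqr_ge0 //.
  rewrite sqrtr_sqr gtr0_norm //; field; apply/eqP; lra.
rewrite ler_sqrt; last by apply: divr_ge0; [apply: mulr_ge0|apply: sqr_ge0].
rewrite ler_pdivlMr ?exprn_gt0 //.
have : K * Q' <= K * Q by apply: ler_wpM2l.
move=> h; apply: le_trans h; rewrite mulrC; exact: hc.
Qed.

Lemma part2 (R : realType) k (c : R) :
  c < Num.sqrt (((k.+2 - 1)%N%:R) ^+ 2 + (k.+2 - 2)%N%:R) / k.+2%:R ->
  exists f : 'I_k.+2 -> R, c * Var2 (star k.+2) f < Var2 (star k.+2) (maxfun (star k.+2) f).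
Proof.
move=> hc.
set N : R := k.+1%:R + 1.
have hN : 2 <= N by rewrite /N; have := ler0n R k; rewrite -natr1; lra.
pose f := fun i : 'I_k.+2 => if (val i == 0)%N then 1 else if (val i == 1)%N then N else (0 : R).
exists f.
have f0 : f ord0 = 1 by [].
have f1 : f (lift ord0 ord0) = N by [].
have f2 : forall j, f (lift ord0 (lift ord0 j)) = 0 by [].
have hA : Aavg f = (1 + N) / N.
  rewrite /Aavg big_ord_recl f0 f1 big1 ?addr0 -/N; last by move=> j _; rewrite f2 normr0.
  by rewrite normr1 (@ger0_norm _ N) //; lra.
set A := Aavg f in hA.
have hN0 : 0 < N by lra.
have hA1 : 1 <= A by rewrite hA ler_pdivlMr //; lra.
have hAN : A <= N by rewrite hA ler_pdivrMr //; nra.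
rewrite !Var2_star !big_ord_recl !Mf0 !MfL f0 f1 -/A.
under eq_bigr => j _ do rewrite f2.
under [X in _ < _ (_ + X)]eq_bigr => j _ do rewrite MfL f2 f0 -/A.
rewrite normr0 normr1 ger0_norm; last lra.
rewrite maxxx.
have -> : Num.max 1 A = A by rewrite maxEle hA1.
have -> : Num.max N (Num.max ((N + 1) / 2) A) = N.
  rewrite !maxEle; case: (leP ((N + 1) / 2) A) => ?; case: (leP N A) => ?;
  case: (leP N ((N + 1) / 2)) => ?; lra.
have -> : Num.max 0 (Num.max ((0 + 1) / 2) A) = A.
  rewrite !maxEle; case: (leP ((0 + 1) / 2) A) => ?; case: (leP 0 A) => ?;
  case: (leP (0 : R) ((0 + 1) / 2)) => ?; lra.
rewrite subrr expr0n /= big1_eq addr0 sumr_const card_ord sqrtr_sqr ger0_norm; last lra.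
have eK : ((k.+2 - 1)%N%:R) ^+ 2 + (k.+2 - 2)%N%:R = (N - 1) ^+ 2 + ((0 - 1) ^+ 2) *+ k :> R.
  rewrite subn1 /= subn2 /= /N -!natr1 -mulr_natr; ring.
rewrite -eK in hc *.
set K := _ + _ in hc *.
have hK : 0 < K by rewrite /K eK -mulr_natr; have := ler0n R k; nra.
have hNA : N - A = K / N.
  have hkN : k%:R = N - 2 by rewrite /N -natr1; ring.
  rewrite hA /K eK -mulr_natr hkN; field; apply/eqP; lra.
rewrite hNA.
have hs : 0 < Num.sqrt K by rewrite sqrtr_gt0.
have hk2 : k.+2%:R = N by rewrite /N natr1.
rewrite hk2 in hc.
have : c * Num.sqrt K < Num.sqrt K / N * Num.sqrt K by rewrite ltr_pM2r.
have -> : Num.sqrt K / N * Num.sqrt K = K / N.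
  by rewrite mulrAC -expr2 sqr_sqrtr // ltW.
by [].
Qed.

Unset Implicit Arguments.

Theorem theorem4p2 (R : realType) (n : nat) (hn : (3 <= n)%N) :
  let C : R := Num.sqrt (((n - 1)%:R) ^+ 2 + (n - 2)%:R) / n%:R in
  (forall f : 'I_n -> R,
     Var2 (star n) (maxfun (star n) f) <= C * Var2 (star n) f) /\
  (forall c : R, c < C ->
     exists f : 'I_n -> R, c * Var2 (star n) f < Var2 (star n) (maxfun (star n) f)).
Proof.
case: n hn => [|[|[|k]]] // _.
move=> C; split.
- move=> f; exact: (@part1 R k.+2 erefl f).
- move=> c hc; exact: (@part2 R k.+1 c hc).
Qed.
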